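(* Let $D,K\in\mathbb{N}$ and let $A_1,A_2,a,\varepsilon>0$ be real numbers with $a<1\leq A_1<A_2$. Let $\{d_n\}_{n\in\mathbb{N}}$ be a sequence of natural numbers and write $D_n=\prod_{i=1}^{n}d_i$. For $i=1,\ldots,K$, let $\{\alpha_{i,n}\}_{n\in\mathbb{N}}$ and $\{b_{i,n}\}_{n\in\mathbb{N}}$ be sequences of complex numbers such that: (1) $|\alpha_{1,n}|<|\alpha_{1,n+1}|$ for all $n\in\mathbb{N}$; (2) $|\alpha_{1,n}|\geq n^{1+\varepsilon}$ for all $n\in\mathbb{N}$; (3) $\liminf_{n\to\infty}|\alpha_{1,n}|^{1/(D^n\prod_{i=1}^{n-1}(KD_i+d_i))}=A_1$; (4) $\limsup_{n\to\infty}|\alpha_{1,n}|^{1/(D^n\prod_{i=1}^{n-1}(KD_i+d_i))}=A_2$; (5) for all $n\in\mathbb{N}$ and all $1<i\leq K$: $2^{-(\log_2|\alpha_{1,n}|)^a}<\frac{|\alpha_{1,n}|}{|\alpha_{i,n}|}<2^{(\log_2|\alpha_{1,n}|)^a}$; (6) for all $n\in\mathbb{N}$ and all $1\leq i\leq K$: $|b_{i,n}|\leq 2^{(\log_2|\alpha_{1,n}|)^a}$. Let $\beta_1,\ldots,\beta_K\in\mathbb{Z}$, not all $0$, and write $\gamma(N)=\sum_{j=1}^{K}\beta_j\sum_{n=N+1}^{\infty}\frac{b_{j,n}}{\alpha_{j,n}}$. Let $c\in(a,1)$. Then $$\liminf_{N\to\infty}|\gamma(N)|\left(2^{D^{cN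}\prod_{i=1}^{N-1}(KD_i+d_i)^{c}}\prod_{n=1}^{N}|\alpha_{1,n}|^{K}\right)^{DD_N}=0.$$
   Context: $\mathbb{N}=\{1,2,3,\ldots\}$; empty products equal $1$. *)

(* Defs.v *)
From Stdlib Require Import Reals ZArith.
From Coquelicot Require Export Coquelicot.
Open Scope R_scope.

Fixpoint prod1 (f : nat -> R) (n : nat) : R :=
  match n with O => 1 | S m => prod1 f m * f (S m) end.

Fixpoint csum1 (f : nat -> C) (K : nat) : C :=
  match K with O => RtoC 0 | S m => Cplus (csum1 f m) (f (S m)) end.

(* real power x^y for x >= 0, with the convention 0^y = 0 (used for y > 0) *)
Definition rpow (x y : R) : R := if Rle_dec x 0 then 0 else Rpower x y.

Definition log2 (x : R) : R := ln x / ln 2.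

Definition Dprod (d : nat -> nat) (n : nat) : R := prod1 (fun i => INR (d i)) n.

Definition Pprod (K : nat) (d : nat -> nat) (n : nat) : R :=
  prod1 (fun i => INR K * Dprod d i + INR (d i)) (n - 1).

Definition Eexp (D K : nat) (d : nat -> nat) (n : nat) : R :=
  INR D ^ n * Pprod K d n.

Definition ctail (f : nat -> C) (N : nat) : C :=
  (Series (fun k => Re (f (N + 1 + k)%nat)), Series (fun k => Im (f (N + 1 + k)%nat))).

Fixpoint Dnat (d : nat -> nat) (n : nat) : nat :=
  match n with O => 1%nat | S m => (Dnat d m * d (S m))%nat end.

(* Main.v *)
Require Import Defs.
From Stdlib Require Import Reals ZArith Lra Lia Classical ClassicalEpsilon.
From Coquelicot Require Import Coquelicot.
Open Scope R_scope.

Lemma ln_le_xm1 : forall x, 0 < x -> ln x <= x - 1.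
Proof.
  intros x Hx. pose proof (exp_ineq1_le (ln x)). rewrite exp_ln in H; lra.
Qed.

Lemma tele_ineq : forall s x, 0 < s -> 1 <= x ->
  s * exp (-((1+s) * ln (x+1))) <= exp (- (s * ln x)) - exp (- (s * ln (x+1))).
Proof.
  intros s x Hs Hx.
  assert (Hlnx : ln x <= ln (x+1) - / (x+1)).
  { assert (H1 : ln (x/(x+1)) <= x/(x+1) - 1) by (apply ln_le_xm1; apply Rdiv_lt_0_compat; lra).
    unfold Rdiv in H1. rewrite ln_mult in H1 by (try lra; apply Rinv_0_lt_compat; lra).
    rewrite ln_Rinv in H1 by lra.
    assert (x * / (x+1) - 1 = - / (x+1)) by (field; lra). lra. }
  assert (He : exp (- ln (x+1)) = / (x+1)).
  { rewrite <- (exp_ln (x+1)) at 2 by lra. rewrite exp_Ropp. reflexivity. }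
  pose proof (exp_ineq1_le (s * (ln (x+1) - ln x))) as Hb.
  assert (E1 : exp (- (s * ln x)) = exp (- (s * ln (x+1))) * exp (s * (ln (x+1) - ln x))).
  { rewrite <- exp_plus. f_equal. ring. }
  assert (E2 : exp (-((1+s) * ln (x+1))) = exp (- (s * ln (x+1))) * exp (- ln (x+1))).
  { rewrite <- exp_plus. f_equal. ring. }
  rewrite E1, E2, He.
  pose proof (exp_pos (- (s * ln (x+1)))).
  assert (s * / (x+1) <= s * (ln (x+1) - ln x)).
  { apply Rmult_le_compat_l; lra. }
  nra.
Qed.

Definition zt (p : R) (i : nat) : R := exp (- (p * ln (INR i + 2))).

Lemma zt_pos : forall p i, 0 < zt p i.
Proof. intros; apply exp_pos. Qed.

Lemma ex_series_zt : forall p, 1 < p -> ex_series (zt p).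
Proof.
  intros p Hp.
  set (s := p - 1).
  assert (Hs : 0 < s) by (unfold s; lra).
  assert (Hb : forall n, sum_n (zt p) n <= / s * (exp (-(s * ln 1)) - exp (-(s * ln (INR n + 2))))).
  { induction n.
    - rewrite sum_O. unfold zt.
      pose proof (tele_ineq s 1 Hs (Rle_refl _)).
      replace (1+s) with p in H by (unfold s; ring). simpl INR.
      replace (0+2) with (1+1) by ring.
      apply (Rmult_le_reg_l s); [lra|]. rewrite <- Rmult_assoc, Rinv_r by lra. lra.
    - rewrite sum_Sn. change (plus ?a ?b) with (a + b).
      pose proof (tele_ineq s (INR n + 2) Hs).
      replace (1+s) with p in H by (unfold s; ring).
      assert (1 <= INR n + 2) by (pose proof (pos_INR n); lra).
      specialize (H H0).
      unfold zt at 2. rewrite S_INR.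
      replace (INR n + 1 + 2) with (INR n + 2 + 1) by ring.
      apply (Rmult_le_reg_l s); [lra|].
      rewrite Rmult_plus_distr_l.
      apply (Rmult_le_compat_l s) in IHn; [|lra].
      rewrite <- Rmult_assoc, Rinv_r in IHn by lra.
      rewrite <- Rmult_assoc, Rinv_r by lra. lra. }
  assert (Hinc : forall n, sum_n (zt p) n <= sum_n (zt p) (S n)).
  { intros n. rewrite sum_Sn. change (plus ?a ?b) with (a + b). pose proof (zt_pos p (S n)). lra. }
  assert (Hbd : forall n, sum_n (zt p) n <= / s).
  { intros n. specialize (Hb n). rewrite ln_1, Rmult_0_r, Ropp_0, exp_0 in Hb.
    pose proof (exp_pos (- (s * ln (INR n + 2)))).
    pose proof (Rinv_0_lt_compat s Hs). nra. }
  destruct (ex_finite_lim_seq_incr _ _ Hinc Hbd) as [l Hl].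
  exists l. exact Hl.
Qed.

Lemma Rpower_pos : forall x y, 0 < Rpower x y.
Proof. intros; unfold Rpower; apply exp_pos. Qed.

Lemma Rpower_le_base : forall x y e, 0 <= e -> 0 < x -> x <= y -> Rpower x e <= Rpower y e.
Proof. intros. apply Rle_Rpower_l; auto. Qed.

Lemma sublin : forall a eta, 0 < a < 1 -> 0 < eta ->
  exists X0, 0 <= X0 /\ forall x, 0 < x -> 2 * Rpower x a <= eta * x + X0.
Proof.
  intros a eta Ha Heta.
  set (T := Rpower (2/eta) (/(1-a))).
  assert (HT : 0 < T) by apply Rpower_pos.
  exists (2 * Rpower T a). split.
  { pose proof (Rpower_pos T a). lra. }
  intros x Hx.
  destruct (Rle_or_lt x T) as [Hle|Hlt].
  - pose proof (Rpower_le_base x T a ltac:(lra) Hx Hle). nra.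
  -
    assert (H1 : Rpower T (1-a) <= Rpower x (1-a)) by (apply Rpower_le_base; lra).
    assert (H2 : Rpower T (1-a) = 2/eta).
    { unfold T. rewrite Rpower_mult. replace (/(1-a) * (1-a)) with 1 by (field; lra).
      apply Rpower_1. apply Rdiv_lt_0_compat; lra. }
    assert (H3 : x = Rpower x a * Rpower x (1-a)).
    { rewrite <- Rpower_plus. replace (a + (1-a)) with 1 by ring. rewrite Rpower_1; lra. }
    pose proof (Rpower_pos x a) as Hxa. pose proof (Rpower_pos T a).
    rewrite H2 in H1.
    assert (2 * Rpower x a <= eta * x).
    { rewrite H3 at 2. 
      assert (H4 : eta * (Rpower x a * Rpower x (1 - a)) >= eta * (Rpower x a * (2/eta))).
      { apply Rle_ge. apply Rmult_le_compat_l; [lra|]. apply Rmult_le_compat_l; lra. }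
      replace (eta * (Rpower x a * (2 / eta))) with (2 * Rpower x a) in H4 by (field; lra). lra. }
    lra.
Qed.

Lemma pow_decr : forall t m n, 0 < t < 1 -> (m <= n)%nat -> t ^ n <= t ^ m.
Proof.
  intros t m n Ht Hmn. replace n with (m + (n - m))%nat by lia.
  rewrite pow_add. pose proof (pow_le t m ltac:(lra)).
  assert (t ^ (n - m) <= 1) by (rewrite <- (pow1 (n - m)); apply pow_incr; lra). nra.
Qed.

Lemma two_pow_ge : forall k, (1 <= k)%nat -> INR k <= 2 ^ (k - 1).
Proof.
  induction k; intros H; [lia|].
  destruct k. { simpl. lra. }
  assert (INR (S k) <= 2 ^ (S k - 1)) by (apply IHk; lia).
  replace (S (S k) - 1)%nat with (S k) by lia. replace (S k - 1)%nat with k in H0 by lia.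
  simpl pow.
  pose proof (pos_INR k). rewrite !S_INR in *. lra.
Qed.

Lemma sq_pow_ge : forall k, (1 <= k)%nat -> INR k * INR k <= 3 * 2 ^ (k - 1).
Proof.
  induction k; intros H; [lia|].
  destruct k. { simpl. lra. }
  destruct k. { simpl. lra. }
  destruct k. { simpl. lra. }
  assert (INR (S (S (S k))) * INR (S (S (S k))) <= 3 * 2 ^ (S (S (S k)) - 1)) by (apply IHk; lia).
  replace (S (S (S (S k))) - 1)%nat with (S (S (S k))) by lia.
  replace (S (S (S k)) - 1)%nat with (S (S k)) in H0 by lia. simpl pow.
  rewrite (S_INR (S (S (S k)))). pose proof (pos_INR k).
  rewrite !S_INR in H0 |- *. simpl pow in H0.
  assert ((INR k + 1 + 1 + 1 + 1) * (INR k + 1 + 1 + 1 + 1) <= 2 * ((INR k + 1 + 1 + 1) * (INR k + 1 + 1 + 1))) by nra.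
  lra.
Qed.

Lemma contr_ineq : forall r k, 1 <= r -> (2 <= k)%nat ->
  1 + INR k * r <= 3/4 * ((1 + r) * (1 + r)) * 2 ^ (k - 2).
Proof.
  intros r k Hr Hk. induction k; [lia|].
  destruct (Nat.eq_dec k 1) as [->|Hk1].
  - simpl. nra.
  - assert (IH : 1 + INR k * r <= 3/4 * ((1+r)*(1+r)) * 2 ^ (k-2)) by (apply IHk; lia).
    replace (S k - 2)%nat with (S (k - 2)) by lia. simpl pow. rewrite S_INR.
    set (w := 2 ^ (k - 2)) in *. assert (0 < w) by (apply pow_lt; lra).
    assert (1 <= INR k) by (apply (le_INR 1); lia). nra.
Qed.

Fixpoint ssum (f : nat -> R) (n : nat) : R :=
  match n with O => 0 | S m => ssum f m + f (S m) end.

Section AL.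
Variables (l E r h : nat -> R) (a eps G th Ch : R) (M : nat).
Hypothesis Ha : 0 < a < 1.
Hypothesis Heps : 0 < eps.
Hypothesis HG : 0 <= G.
Hypothesis Hth : 0 < th < 1.
Hypothesis HCh : 0 <= Ch.
Hypothesis HM : (1 <= M)%nat.
Hypothesis HEpos : forall n, (1 <= n)%nat -> 0 < E n.
Hypothesis HEr : forall n, (1 <= n)%nat -> (1 + r n) * E n <= E (S n).
Hypothesis Hr : forall n, (1 <= n)%nat -> 1 <= r n <= r (S n).
Hypothesis Hh : forall n, (1 <= n)%nat -> 0 <= h n <= Ch * th ^ n * E (S n).
Hypothesis HE1 : forall n, (1 <= n)%nat -> / E (S n) <= th ^ n.
Hypothesis HE2 : forall n, (1 <= n)%nat -> Rpower (E (S n)) (a - 1) <= th ^ n.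
Hypothesis Hlinc : forall n, (1 <= n)%nat -> l n < l (S n).
Hypothesis Hlge : forall n, (1 <= n)%nat -> (1 + eps) * ln (INR n) <= l n.

Definition failk (N k : nat) : Prop :=
  l (N + k) - 2 * Rpower (l (N + k)) a <
    r N * ssum l N + h N + G + (1 + eps / 2) * ln (INR k + 1).

Hypothesis HF : forall N, (M <= N)%nat -> exists k, (1 <= k)%nat /\ failk N k.
Hypothesis HY : exists Yb, exists M1, forall n, (M1 <= n)%nat -> l n / E n <= Yb.
Hypothesis Hq : exists qs : R, is_lim_seq (fun n => E n / E (S n)) qs.

Lemma l_nonneg : forall n, (1 <= n)%nat -> 0 <= l n.
Proof.
  intros n Hn. pose proof (Hlge n Hn).
  assert (0 <= ln (INR n)).
  { rewrite <- ln_1. apply ln_le; [lra|]. apply (le_INR 1); lia. }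
  nra.
Qed.

Lemma l_mono : forall m n, (1 <= m)%nat -> (m <= n)%nat -> l m <= l n.
Proof.
  intros m n Hm Hmn. induction n.
  - lia.
  - destruct (Nat.eq_dec m (S n)) as [->|Hne]; [lra|].
    assert (l m <= l n) by (apply IHn; lia).
    pose proof (Hlinc n ltac:(lia)). lra.
Qed.

Lemma ssum_nonneg : forall n, 0 <= ssum l n.
Proof.
  induction n; simpl; [lra|]. pose proof (l_nonneg (S n) ltac:(lia)). lra.
Qed.

Lemma ssum_bound : forall N j, (1 <= N)%nat ->
  ssum l (N + j) <= ssum l N + INR j * l (N + j).
Proof.
  intros N j HN. induction j.
  - rewrite Nat.add_0_r. simpl. lra.
  - rewrite Nat.add_succ_r. simpl ssum.
    assert (l (N + j) <= l (S (N + j))) by (apply l_mono; lia).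
    rewrite S_INR. pose proof (pos_INR j).
    pose proof (l_nonneg (N + j) ltac:(lia)). nra.
Qed.

Lemma E_two : forall n, (1 <= n)%nat -> 2 * E n <= E (S n).
Proof.
  intros n Hn. pose proof (HEr n Hn). pose proof (Hr n Hn). pose proof (HEpos n Hn). nra.
Qed.

Lemma E_grow : forall n j, (1 <= n)%nat -> 2 ^ j * E n <= E (n + j).
Proof.
  intros n j Hn. induction j.
  - rewrite Nat.add_0_r. simpl. lra.
  - rewrite Nat.add_succ_r. simpl pow.
    pose proof (E_two (n + j) ltac:(lia)). lra.
Qed.

Lemma E_two_step : forall n, (1 <= n)%nat -> (1 + r n) * (1 + r n) * E n <= E (S (S n)).
Proof.
  intros n Hn. pose proof (HEr n Hn). pose proof (HEr (S n) ltac:(lia)).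
  pose proof (Hr n Hn). pose proof (Hr (S n) ltac:(lia)). pose proof (HEpos n Hn).
  pose proof (HEpos (S n) ltac:(lia)).
  assert ((1 + r n) * E (S n) <= (1 + r (S n)) * E (S n)) by nra.
  nra.
Qed.

Lemma E_ge1 : forall n, (1 <= n)%nat -> 1 <= E (S n).
Proof.
  intros n Hn. pose proof (HE1 n Hn). pose proof (HEpos (S n) ltac:(lia)).
  assert (th ^ n <= 1) by (rewrite <- (pow1 n); apply pow_incr; lra).
  assert (/ E (S n) <= 1) by lra.
  apply Rmult_le_compat_r with (r := E (S n)) in H2; [|lra].
  rewrite Rinv_l in H2 by lra. lra.
Qed.


Definition Phi (N : nat) : R := r N * ssum l N + h N.
Definition eta0 : R := eps / (4 * (1 + eps)).
Definition Cl : R := (1 + (1 + eps / 2) * (4 / eps)) / (1 - eta0).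

Lemma eta0_bounds : 0 < eta0 < 1 /\ (1 - eta0) * (1 + eps) = 1 + 3 * eps / 4.
Proof.
  unfold eta0. split; [split|].
  - apply Rdiv_lt_0_compat; lra.
  - apply (Rmult_lt_reg_r (4 * (1 + eps))); [lra|].
    unfold Rdiv. rewrite Rmult_assoc, Rinv_l by lra. lra.
  - field. lra.
Qed.

Lemma Cl_pos : 0 < Cl.
Proof.
  unfold Cl. destruct eta0_bounds as [[H1 H2] _]. apply Rdiv_lt_0_compat; [|lra].
  assert (0 < (1 + eps / 2) * (4 / eps)) by (apply Rmult_lt_0_compat; [lra|apply Rdiv_lt_0_compat; lra]).
  lra.
Qed.

Lemma L1 : forall X0, 0 <= X0 -> (forall x, 0 < x -> 2 * Rpower x a <= eta0 * x + X0) ->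
  forall N k, (M <= N)%nat -> (1 <= k)%nat -> failk N k ->
  eps / 4 * ln (INR k + 1) < Phi N + G + X0 /\
  0 < l (N + k) /\
  l (N + k) <= Cl * (Phi N + G + X0) /\
  l (N + k) <= Phi N + G + (1 + eps / 2) * ln (INR k + 1) + 2 * Rpower (Cl * (Phi N + G + X0)) a.
Proof.
  intros X0 HX0 HX N k HN Hk Hf. unfold failk in Hf. fold (Phi N) in Hf.
  destruct eta0_bounds as [[He1 He2] He3].
  set (L := l (N + k)) in *.
  set (lk := ln (INR k + 1)) in *.
  set (Ps := Phi N + G + X0).
  assert (Hlk0 : 0 <= lk).
  { unfold lk. rewrite <- ln_1. apply ln_le; [lra|]. pose proof (pos_INR k); lra. }
  assert (HlnNk : lk <= ln (INR (N + k))).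
  { unfold lk. apply ln_le; [pose proof (pos_INR k); lra|].
    rewrite plus_INR. assert (1 <= INR N) by (apply (le_INR 1); lia). lra. }
  assert (HL1 : (1 + eps) * lk <= L).
  { pose proof (Hlge (N + k) ltac:(lia)). fold L in H. nra. }
  assert (HLpos : 0 < L).
  { assert (0 < lk).
    { unfold lk. rewrite <- ln_1. apply ln_increasing; [lra|].
      assert (1 <= INR k) by (apply (le_INR 1); lia). lra. }
    nra. }
  pose proof (HX L HLpos) as HXL.
  assert (H1 : (1 - eta0) * L - X0 < Phi N + G + (1 + eps / 2) * lk) by lra.
  assert (H2 : (1 + 3 * eps / 4) * lk <= (1 - eta0) * L).
  { rewrite <- He3. rewrite Rmult_assoc. apply Rmult_le_compat_l; lra. }
  assert (Ha1 : eps / 4 * lk < Ps) by (unfold Ps; lra).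
  assert (Hlk : lk < 4 / eps * Ps).
  { apply (Rmult_lt_reg_l (eps / 4)); [lra|].
    replace (eps / 4 * (4 / eps * Ps)) with Ps by (field; lra). exact Ha1. }
  assert (Hb : (1 - eta0) * L < (1 + (1 + eps / 2) * (4 / eps)) * Ps).
  { assert ((1 + eps / 2) * lk <= (1 + eps/2) * (4 / eps * Ps)) by (apply Rmult_le_compat_l; lra).
    unfold Ps in *. lra. }
  assert (HLb : L <= Cl * Ps).
  { unfold Cl. apply (Rmult_le_reg_l (1 - eta0)); [lra|].
    replace ((1 - eta0) * ((1 + (1 + eps / 2) * (4 / eps)) / (1 - eta0) * Ps))
      with ((1 + (1 + eps / 2) * (4 / eps)) * Ps) by (field; lra). lra. }
  split; [exact Ha1|]. split; [exact HLpos|]. split; [exact HLb|].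
  assert (Rpower L a <= Rpower (Cl * Ps) a) by (apply Rpower_le_base; lra).
  lra.
Qed.

Lemma sigma_nonneg : forall n, (1 <= n)%nat -> 0 <= ssum l n / E n.
Proof.
  intros n Hn. apply Rdiv_le_0_compat; [apply ssum_nonneg| apply HEpos; auto].
Qed.

Lemma sigma_rec : forall n, (1 <= n)%nat ->
  ssum l (S n) / E (S n) = E n / E (S n) * (ssum l n / E n) + l (S n) / E (S n).
Proof.
  intros n Hn. simpl ssum. pose proof (HEpos n Hn). pose proof (HEpos (S n) ltac:(lia)).
  field. lra.
Qed.

Lemma sigma_bounded : exists B, 0 <= B /\ exists M2, (1 <= M2)%nat /\
  forall n, (M2 <= n)%nat -> ssum l n / E n <= B.
Proof.
  destruct HY as [Yb [M1 HYb]].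
  set (M2 := Nat.max M1 1).
  exists (Rmax (Rmax (ssum l M2 / E M2) (2 * Yb)) 0).
  split; [apply Rmax_r|]. exists M2. split; [unfold M2; lia|].
  intros n Hn. replace n with (M2 + (n - M2))%nat by lia.
  generalize (n - M2)%nat. intros t. induction t.
  - rewrite Nat.add_0_r. eapply Rle_trans; [|apply Rmax_l]. apply Rmax_l.
  - rewrite Nat.add_succ_r. rewrite sigma_rec by (unfold M2; lia).
    assert (HM2 : (1 <= M2 + t)%nat) by (unfold M2; lia).
    pose proof (HEpos (M2 + t) HM2). pose proof (HEpos (S (M2 + t)) ltac:(lia)).
    pose proof (E_two (M2 + t) HM2).
    assert (Hq2 : E (M2 + t) / E (S (M2 + t)) <= / 2).
    { apply (Rmult_le_reg_r (E (S (M2 + t)))); [lra|].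
      unfold Rdiv. rewrite Rmult_assoc, Rinv_l by lra. lra. }
    assert (Hq0 : 0 <= E (M2 + t) / E (S (M2 + t))) by (apply Rdiv_le_0_compat; lra).
    pose proof (sigma_nonneg (M2 + t) HM2).
    assert (Hy : l (S (M2 + t)) / E (S (M2 + t)) <= Yb) by (apply HYb; unfold M2; lia).
    set (B := Rmax (Rmax (ssum l M2 / E M2) (2 * Yb)) 0) in *.
    assert (2 * Yb <= B) by (unfold B; eapply Rle_trans; [|apply Rmax_l]; apply Rmax_r).
    assert (0 <= B) by (unfold B; apply Rmax_r).
    assert (E (M2 + t) / E (S (M2 + t)) * (ssum l (M2 + t) / E (M2 + t)) <= / 2 * B) by nra.
    lra.
Qed.

Lemma div_le : forall x y z, 0 < z -> x <= y * z -> x / z <= y.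
Proof.
  intros x y z Hz H. apply (Rmult_le_reg_r z); [lra|]. unfold Rdiv.
  rewrite Rmult_assoc, Rinv_l by lra. lra.
Qed.

Lemma MS : forall X0, 0 <= X0 -> (forall x, 0 < x -> 2 * Rpower x a <= eta0 * x + X0) ->
  forall B, 0 <= B -> forall M2, (1 <= M2)%nat -> (forall n, (M2 <= n)%nat -> ssum l n / E n <= B) ->
  exists A, 0 <= A /\ exists Cy, 0 <= Cy /\
  forall N k, (Nat.max M M2 <= N)%nat -> (1 <= k)%nat -> failk N k ->
   ssum l (N + k) / E (N + k) <= ssum l N / E N + A * th ^ N /\
   ((2 <= k)%nat -> ssum l (N + k) / E (N + k) <= 3 / 4 * (ssum l N / E N) + A * th ^ N) /\
   (forall j, (1 <= j <= k)%nat -> l (N + j) / E (N + j) <= Cy * (ssum l N / E N + th ^ N)).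
Proof.
  intros X0 HX0 HX B HB M2 HM2 HBd.
  set (CP := B + Ch + G + X0).
  set (p := 1 + eps / 2).
  exists (Ch + 3 * (G + p) + 2 * Rpower (Cl * CP) a).
  split. { pose proof (Rpower_pos (Cl * CP) a). unfold p; lra. }
  exists (Cl * (1 + Ch + G + X0)).
  split. { pose proof Cl_pos. apply Rmult_le_pos; lra. }
  intros N k HN Hk Hf.
  assert (HN1 : (1 <= N)%nat) by lia.
  destruct (L1 X0 HX0 HX N k ltac:(lia) Hk Hf) as [Hlk [HLpos [HLb HLc]]].
  fold p in HLc.
  set (Sm := ssum l N) in *.
  set (EN := E N). set (E1 := E (S N)).
  assert (HEN : 0 < EN) by (apply HEpos; lia).
  assert (HE1p : 0 < E1) by (apply HEpos; lia).
  assert (HE1g : 1 <= E1) by (apply E_ge1; lia).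
  set (sg := Sm / EN).
  assert (HS : Sm = sg * EN) by (unfold sg; field; lra).
  assert (Hsg0 : 0 <= sg) by (apply sigma_nonneg; lia).
  assert (HsgB : sg <= B) by (apply HBd; lia).
  pose proof (Hr N HN1) as [Hr1 Hr2].
  pose proof (HEr N HN1) as HEr1. fold EN E1 in HEr1.
  pose proof (Hh N HN1) as [Hh0 Hh1]. fold E1 in Hh1.
  assert (Hthn : 0 < th ^ N) by (apply pow_lt; lra).
  assert (Hthn1 : th ^ N <= 1) by (rewrite <- (pow1 N); apply pow_incr; lra).
  assert (HrS : r N * Sm <= sg * E1).
  { rewrite HS. assert (r N * EN <= E1) by nra. nra. }
  set (Ps := Phi N + G + X0) in *.
  assert (HPs : Ps <= CP * E1).
  { unfold Ps, Phi, CP. fold Sm. 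
    assert (h N <= Ch * E1) by nra.
    assert (G + X0 <= (G + X0) * E1) by nra.
    nra. }
  assert (HlkP : 0 <= ln (INR k + 1)).
  { rewrite <- ln_1. apply ln_le; [lra|]. pose proof (pos_INR k); lra. }
  assert (HPs0 : 0 < Ps).
  { assert (0 <= eps / 4 * ln (INR k + 1)) by (apply Rmult_le_pos; lra). lra. }
  assert (HCP : 0 < CP) by nra.
  set (L := l (N + k)) in *.
  set (P := Rpower (Cl * Ps) a) in *.
  assert (HP0 : 0 < P) by apply Rpower_pos.
  assert (Hsum : ssum l (N + k) <= Sm + INR k * L) by (apply ssum_bound; lia).
  assert (Hk1 : 1 <= INR k) by (apply (le_INR 1); lia).
  assert (Hk2 : INR k <= 2 ^ (k - 1)) by (apply two_pow_ge; lia).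
  assert (Hk3 : INR k * INR k <= 3 * 2 ^ (k - 1)) by (apply sq_pow_ge; lia).
  assert (Hlnk : ln (INR k + 1) <= INR k).
  { pose proof (ln_le_xm1 (INR k + 1) ltac:(lra)). lra. }
  set (Y := h N + 3 * (G + p) + 2 * P).
  assert (Hp : 0 < p) by (unfold p; lra).
  assert (HkL : INR k * L <= INR k * (r N * Sm) + 2 ^ (k - 1) * Y).
  { assert (INR k * L <= INR k * (r N * Sm) + INR k * (h N + 2 * P) + INR k * (G + p * ln (INR k + 1))).
    { unfold Phi in HLc. fold Sm in HLc. nra. }
    assert (INR k * (h N + 2 * P) <= 2 ^ (k - 1) * (h N + 2 * P)) by nra.
    assert (INR k * (G + p * ln (INR k + 1)) <= (G + p) * (INR k * INR k)).
    { assert (0 <= G * (INR k * (INR k - 1))) by (apply Rmult_le_pos; [lra| apply Rmult_le_pos; lra]).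
      assert (0 <= p * INR k * (INR k - ln (INR k + 1))) by (apply Rmult_le_pos; [apply Rmult_le_pos; lra| lra]).
      lra. }
    assert ((G + p) * (INR k * INR k) <= (G + p) * (3 * 2 ^ (k - 1))) by nra.
    unfold Y. nra. }
  set (Ek := E (N + k)).
  assert (HEk : 2 ^ (k - 1) * E1 <= Ek).
  { unfold Ek, E1. replace (N + k)%nat with (S N + (k - 1))%nat by lia. apply E_grow. lia. }
  assert (H2k : 0 < 2 ^ (k - 1)) by (apply pow_lt; lra).
  assert (HEkp : 0 < Ek) by nra.
  assert (HY1 : Y <= (Ch + 3 * (G + p) + 2 * Rpower (Cl * CP) a) * th ^ N * E1).
  { unfold Y.
    assert (H3 : 3 * (G + p) <= 3 * (G + p) * th ^ N * E1).
    { pose proof (HE1 N HN1) as Hi. fold E1 in Hi.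
      assert (1 <= th ^ N * E1).
      { apply Rmult_le_compat_r with (r := E1) in Hi; [|lra]. rewrite Rinv_l in Hi by lra. lra. }
      nra. }
    assert (HPb : P <= Rpower (Cl * CP) a * th ^ N * E1).
    { assert (P <= Rpower (Cl * CP * E1) a).
      { unfold P. apply Rpower_le_base; [lra| |].
        - pose proof Cl_pos. nra.
        - pose proof Cl_pos. nra. }
      rewrite <- Rpower_mult_distr in H by (pose proof Cl_pos; nra).
      assert (Rpower E1 a = Rpower E1 (a - 1) * E1).
      { rewrite <- (Rpower_1 E1) at 3 by lra. rewrite <- Rpower_plus. f_equal. ring. }
      pose proof (HE2 N HN1) as H5. fold E1 in H5.
      pose proof (Rpower_pos (Cl * CP) a). pose proof (Rpower_pos E1 (a - 1)).
      rewrite H0 in H. nra. }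
    nra. }
  assert (Hmain : ssum l (N + k) <= Sm * (1 + INR k * r N) + 2 ^ (k - 1) * Y) by nra.
  assert (HYk : 2 ^ (k - 1) * Y / Ek <= (Ch + 3 * (G + p) + 2 * Rpower (Cl * CP) a) * th ^ N).
  { apply div_le; [lra|].
    assert (0 <= Y) by (unfold Y; lra).
    nra. }
  assert (Hsplit : ssum l (N + k) / Ek <= Sm * (1 + INR k * r N) / Ek + 2 ^ (k - 1) * Y / Ek).
  { unfold Rdiv. rewrite <- Rmult_plus_distr_r. apply Rmult_le_compat_r; [|lra].
    left. apply Rinv_0_lt_compat. lra. }
  assert (HS0 : 0 <= Sm) by (rewrite HS; nra).
  assert (Hc34 : (2 <= k)%nat -> Sm * (1 + INR k * r N) / Ek <= 3 / 4 * sg).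
  { intros Hk2'. apply div_le; [lra|].
    assert (HE2s : (1 + r N) * (1 + r N) * EN <= E (S (S N))) by (apply E_two_step; lia).
    assert (HEk2 : 2 ^ (k - 2) * E (S (S N)) <= Ek).
    { unfold Ek. replace (N + k)%nat with (S (S N) + (k - 2))%nat by lia. apply E_grow. lia. }
    pose proof (contr_ineq (r N) k Hr1 Hk2') as Hci.
    assert (H2k2 : 0 < 2 ^ (k - 2)) by (apply pow_lt; lra).
    assert (Sm * (1 + INR k * r N) <= Sm * (3 / 4 * ((1 + r N) * (1 + r N)) * 2 ^ (k - 2))) by nra.
    rewrite HS in H |- *.
    assert (2 ^ (k - 2) * ((1 + r N) * (1 + r N) * EN) <= Ek) by nra.
    nra. }
  assert (Hc1 : Sm * (1 + INR k * r N) / Ek <= sg).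
  { destruct (Nat.eq_dec k 1) as [->|Hk1'].
    - apply div_le; [lra|]. unfold Ek. replace (N + 1)%nat with (S N) by lia. fold E1.
      simpl INR. rewrite HS. nra.
    - pose proof (Hc34 ltac:(lia)). lra. }
  split; [|split].
  - fold Ek. lra.
  - intros Hk2'. fold Ek. pose proof (Hc34 Hk2'). lra.
  - intros j Hj.
    assert (Hlj : l (N + j) <= L) by (apply l_mono; lia).
    assert (HEj : E1 <= E (N + j)).
    { replace (N + j)%nat with (S N + (j - 1))%nat by lia.
      pose proof (E_grow (S N) (j - 1) ltac:(lia)).
      assert (1 <= 2 ^ (j - 1)) by (apply pow_R1_Rle; lra). fold E1 in H. nra. }
    pose proof (l_nonneg (N + j) ltac:(lia)).
    apply div_le; [lra|].
    assert (HPs2 : Ps <= sg * E1 + (Ch + G + X0) * th ^ N * E1).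
    { unfold Ps, Phi. fold Sm.
      pose proof (HE1 N HN1) as Hi. fold E1 in Hi.
      assert (1 <= th ^ N * E1).
      { apply Rmult_le_compat_r with (r := E1) in Hi; [|lra]. rewrite Rinv_l in Hi by lra. lra. }
      nra. }
    pose proof Cl_pos.
    assert (L <= Cl * (sg * E1 + (Ch + G + X0) * th ^ N * E1)) by nra.
    assert (Cl * (sg * E1 + (Ch + G + X0) * th ^ N * E1) <= Cl * (1 + Ch + G + X0) * (sg + th ^ N) * E1).
    { assert (0 <= Cl * E1 * (th ^ N + (Ch + G + X0) * sg)).
      { apply Rmult_le_pos; [apply Rmult_le_pos; lra|]. assert (0 <= (Ch + G + X0) * sg) by (apply Rmult_le_pos; lra). lra. }
      lra. }
    nra.
Qed.

Theorem AL_main : exists L : R, is_lim_seq (fun n => l n / E n) L.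
Proof.
  destruct (sublin a eta0 Ha (proj1 (proj1 eta0_bounds))) as [X0 [HX0 HX]].
  destruct sigma_bounded as [B [HB [M2 [HM2 HBd]]]].
  destruct (MS X0 HX0 HX B HB M2 HM2 HBd) as [A [HA [Cy [HCy Hms]]]].
  set (M3 := Nat.max M M2) in *.
  assert (Hex : forall N, exists k, (M3 <= N)%nat -> (1 <= k)%nat /\ failk N k).
  { intros N. destruct (le_lt_dec M3 N) as [HN|HN].
    - destruct (HF N ltac:(unfold M3 in *; lia)) as [k Hk]. exists k. auto.
    - exists 1%nat. intros; lia. }
  set (kf := fun N => proj1_sig (constructive_indefinite_description _ (Hex N))).
  assert (Hkf : forall N, (M3 <= N)%nat -> (1 <= kf N)%nat /\ failk N (kf N)).
  { intros N HN. unfold kf. destruct (constructive_indefinite_description _ (Hex N)) as [k Hk].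
    simpl. auto. }
  set (c := fix c (i : nat) : nat := match i with O => M3 | S i' => (c i' + kf (c i'))%nat end).
  assert (HcS : forall i, c (S i) = (c i + kf (c i))%nat) by reflexivity.
  assert (Hc0 : c O = M3) by reflexivity.
  assert (Hcge : forall i, (M3 + i <= c i)%nat).
  { induction i; [rewrite Hc0; lia|]. rewrite HcS. pose proof (Hkf (c i) ltac:(lia)). lia. }
  assert (Hcinc : forall i, (c i + 1 <= c (S i))%nat).
  { intros i. rewrite HcS. pose proof (Hkf (c i) ltac:(specialize (Hcge i); lia)). lia. }
  assert (HM3 : (1 <= M3)%nat) by (unfold M3; lia).
  set (sg := fun n => ssum l n / E n).
  assert (Hth1 : 0 < 1 - th) by lra.
  destruct (classic (exists i0, forall i, (i0 <= i)%nat -> kf (c i) = 1%nat)) as [[i0 Hi0]|Hno].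
  -
    set (n0 := c i0).
    assert (Hct : forall t, c (i0 + t)%nat = (n0 + t)%nat).
    { induction t. { rewrite !Nat.add_0_r. reflexivity. }
      rewrite Nat.add_succ_r, HcS, Hi0 by lia. rewrite IHt. lia. }
    assert (Hkn : forall n, (n0 <= n)%nat -> kf n = 1%nat).
    { intros n Hn. replace n with (n0 + (n - n0))%nat by lia. rewrite <- Hct. apply Hi0. lia. }
    assert (Hn0 : (M3 <= n0)%nat) by (unfold n0; specialize (Hcge i0); lia).
    assert (Hstep : forall n, (n0 <= n)%nat -> sg (S n) <= sg n + A * th ^ n).
    { intros n Hn. destruct (Hkf n ltac:(lia)) as [Hk1 Hfk]. rewrite (Hkn n Hn) in Hfk.
      destruct (Hms n 1%nat ltac:(unfold M3 in *; lia) ltac:(lia) Hfk) as [H1 _].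
      unfold sg. replace (S n) with (n + 1)%nat by lia. exact H1. }
    set (V := fun t => sg (n0 + t)%nat + A * th ^ (n0 + t) / (1 - th)).
    assert (HVd : forall t, V (S t) <= V t).
    { intros t. unfold V. rewrite Nat.add_succ_r. pose proof (Hstep (n0 + t)%nat ltac:(lia)).
      assert (A * th ^ S (n0 + t) / (1 - th) + A * th ^ (n0 + t) = A * th ^ (n0 + t) / (1 - th)).
      { simpl pow. field. lra. }
      lra. }
    assert (HV0 : forall t, 0 <= V t).
    { intros t. unfold V. assert (0 <= sg (n0 + t)%nat) by (apply sigma_nonneg; lia).
      assert (0 <= A * th ^ (n0 + t) / (1 - th)).
      { apply Rdiv_le_0_compat; [|lra]. apply Rmult_le_pos; [lra|]. apply pow_le; lra. }
      lra. }
    destruct (ex_finite_lim_seq_decr V 0 HVd HV0) as [LV HLV].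
    assert (Hgeo : is_lim_seq (fun t => A * th ^ (n0 + t) / (1 - th)) 0).
    { apply is_lim_seq_ext with (u := fun t => (A * th ^ n0 / (1 - th)) * th ^ t).
      { intros t. rewrite pow_add. field. lra. }
      replace (Finite 0) with (Rbar_mult (A * th ^ n0 / (1 - th)) 0) by (simpl; f_equal; ring).
      apply is_lim_seq_scal_l. apply is_lim_seq_geom. rewrite Rabs_pos_eq; lra. }
    assert (Hsg1 : is_lim_seq (fun t => sg (n0 + t)%nat) LV).
    { apply is_lim_seq_ext with (u := fun t => V t - A * th ^ (n0 + t) / (1 - th)).
      { intros t. unfold V. ring. }
      replace (Finite LV) with (Finite (LV - 0)) by (f_equal; ring).
      apply is_lim_seq_minus'; auto. }
    assert (Hsg : is_lim_seq sg LV).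
    { apply (is_lim_seq_incr_n sg n0). apply is_lim_seq_ext with (u := fun t => sg (n0 + t)%nat); auto.
      intros t. f_equal. lia. }
    destruct Hq as [qs Hqs].
    exists (LV - qs * LV).
    apply is_lim_seq_incr_1.
    apply is_lim_seq_ext_loc with (u := fun n => sg (S n) - E n / E (S n) * sg n).
    { exists 1%nat. intros n Hn. unfold sg. rewrite sigma_rec by lia. ring. }
    apply is_lim_seq_minus'.
    + apply -> is_lim_seq_incr_1. exact Hsg.
    + apply is_lim_seq_mult'; auto.
  -
    assert (Hinf : forall i0, exists i, (i0 <= i)%nat /\ (2 <= kf (c i))%nat).
    { intros i0. apply NNPP. intros Hn. apply Hno. exists i0. intros i Hi.
      pose proof (Hkf (c i) ltac:(specialize (Hcge i); lia)) as [Hk1 _].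
      destruct (Nat.eq_dec (kf (c i)) 1) as [Heq|Hne]; auto.
      exfalso. apply Hn. exists i. split; auto. lia. }
    exists 0. apply is_lim_seq_spec. intros ep.
    set (e1 := ep / (3 * Cy + 3)).
    assert (He1 : 0 < e1) by (unfold e1; apply Rdiv_lt_0_compat; [apply cond_pos|lra]).
    assert (He1b : 3 * Cy * e1 < ep).
    { unfold e1. pose proof (cond_pos ep). apply (Rmult_lt_reg_r (3 * Cy + 3)); [lra|].
      replace (3 * Cy * (ep / (3 * Cy + 3)) * (3 * Cy + 3)) with (3 * Cy * ep) by (field; lra). nra. }
    set (W := fun i => A * th ^ (c i) / (1 - th)).
    set (V := fun i => sg (c i) + W i).
    assert (HW0 : forall i, 0 <= W i).
    { intros i. unfold W. apply Rdiv_le_0_compat; [|lra]. apply Rmult_le_pos; [lra|]. apply pow_le; lra. }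
    assert (Hsg0 : forall i, 0 <= sg (c i)).
    { intros i. apply sigma_nonneg. specialize (Hcge i). lia. }
    assert (HWS : forall i, A * th ^ c i + W (S i) <= W i).
    { intros i. unfold W.
      pose proof (pow_decr th (S (c i)) (c (S i)) Hth ltac:(specialize (Hcinc i); lia)) as Hd.
      assert (A * th ^ c (S i) / (1 - th) <= A * th ^ S (c i) / (1 - th)).
      { unfold Rdiv. apply Rmult_le_compat_r; [left; apply Rinv_0_lt_compat; lra|]. apply Rmult_le_compat_l; lra. }
      assert (A * th ^ c i + A * th ^ S (c i) / (1 - th) = A * th ^ c i / (1 - th)).
      { simpl pow. field. lra. }
      lra. }
    assert (HVS : forall i, V (S i) <= V i).
    { intros i. unfold V. destruct (Hkf (c i) ltac:(specialize (Hcge i); lia)) as [Hk1 Hfk].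
      destruct (Hms (c i) (kf (c i)) ltac:(specialize (Hcge i); unfold M3 in *; lia) Hk1 Hfk) as [H1 _].
      rewrite <- HcS in H1. fold (sg (c (S i))) in H1. fold (sg (c i)) in H1.
      pose proof (HWS i). lra. }
    assert (HVC : forall i, (2 <= kf (c i))%nat -> V (S i) <= 3 / 4 * V i + W i / 4).
    { intros i Hk2. unfold V. destruct (Hkf (c i) ltac:(specialize (Hcge i); lia)) as [Hk1 Hfk].
      destruct (Hms (c i) (kf (c i)) ltac:(specialize (Hcge i); unfold M3 in *; lia) Hk1 Hfk) as [_ [H2 _]].
      specialize (H2 Hk2).
      rewrite <- HcS in H2. fold (sg (c (S i))) in H2. fold (sg (c i)) in H2.
      pose proof (HWS i). lra. }
    assert (HVm : forall i j, (i <= j)%nat -> V j <= V i).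
    { intros i j Hij. induction Hij; [lra|]. pose proof (HVS m). lra. }
    assert (Hthc : forall i, th ^ c i <= th ^ i).
    { intros i. apply pow_decr; auto. specialize (Hcge i). lia. }
    set (yb := Rmin e1 (e1 * (1 - th) / (A + 1))).
    assert (Hyb : 0 < yb).
    { unfold yb. apply Rmin_pos; auto. apply Rdiv_lt_0_compat; [|lra]. nra. }
    destruct (pow_lt_1_zero th ltac:(rewrite Rabs_pos_eq; lra) yb Hyb) as [i1 Hi1].
    assert (Hsmall : forall i, (i1 <= i)%nat -> th ^ c i <= e1 /\ W i <= e1).
    { intros i Hi. specialize (Hi1 i ltac:(lia)). rewrite Rabs_pos_eq in Hi1 by (apply pow_le; lra).
      pose proof (Hthc i).
      assert (Hc : th ^ c i < yb) by lra.
      split.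
      - assert (yb <= e1) by apply Rmin_l. lra.
      - assert (yb <= e1 * (1 - th) / (A + 1)) by apply Rmin_r.
        unfold W. apply div_le; [lra|].
        assert (A * th ^ c i <= A * (e1 * (1 - th) / (A + 1))).
        { apply Rmult_le_compat_l; lra. }
        assert (A * (e1 * (1 - th) / (A + 1)) <= e1 * (1 - th)).
        { unfold Rdiv. apply (Rmult_le_reg_r (A + 1)); [lra|].
          replace (A * (e1 * (1 - th) * / (A + 1)) * (A + 1)) with (A * (e1 * (1 - th))) by (field; lra).
          nra. }
        lra. }
    assert (Hclaim : forall t, exists it, (i1 <= it)%nat /\
              forall i, (it <= i)%nat -> V i <= (3 / 4) ^ t * V i1 + e1).
    { induction t.
      - exists i1. split; [lia|]. intros i Hi. simpl. pose proof (HVm i1 i Hi). lra.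
      - destruct IHt as [it [Hit HV]].
        destruct (Hinf it) as [i [Hii Hk2]].
        exists (S i). split; [lia|]. intros i' Hi'.
        pose proof (HVm (S i) i' Hi'). pose proof (HVC i Hk2).
        pose proof (HV i Hii). pose proof (Hsmall i ltac:(lia)) as [_ HWi].
        simpl pow. lra. }
    assert (HV1 : 0 <= V i1) by (unfold V; pose proof (Hsg0 i1); pose proof (HW0 i1); lra).
    destruct (pow_lt_1_zero (3/4) ltac:(rewrite Rabs_pos_eq; lra) (e1 / (V i1 + 1))
               ltac:(apply Rdiv_lt_0_compat; lra)) as [t Ht].
    specialize (Ht t (le_n t)). rewrite Rabs_pos_eq in Ht by (apply pow_le; lra).
    assert (Ht2 : (3 / 4) ^ t * V i1 <= e1).
    { apply Rlt_le in Ht. apply Rmult_le_compat_r with (r := V i1 + 1) in Ht; [|lra].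
      replace (e1 / (V i1 + 1) * (V i1 + 1)) with e1 in Ht by (field; lra).
      pose proof (pow_le (3/4) t ltac:(lra)). nra. }
    destruct (Hclaim t) as [it [Hit HVt]].
    assert (Hsgs : forall i, (it <= i)%nat -> sg (c i) <= 2 * e1).
    { intros i Hi. pose proof (HVt i Hi). pose proof (HW0 i). unfold V in *. lra. }
    assert (Hcover : forall n, (c it < n)%nat -> exists i, (it <= i)%nat /\ (c i < n <= c (S i))%nat).
    { induction n; intros Hn; [lia|].
      destruct (Nat.eq_dec n (c it)) as [Heq|Hne].
      - exists it. split; [lia|]. pose proof (Hcinc it). lia.
      - destruct (IHn ltac:(lia)) as [i [Hi1' Hi2']].
        destruct (Nat.eq_dec n (c (S i))) as [Heq2|Hne2].
        + exists (S i). split; [lia|]. pose proof (Hcinc (S i)). lia.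
        + exists i. split; [lia|]. lia. }
    exists (S (c it)). intros n Hn.
    destruct (Hcover n ltac:(lia)) as [i [Hi [Hlo Hhi]]].
    destruct (Hkf (c i) ltac:(specialize (Hcge i); lia)) as [Hk1 Hfk].
    destruct (Hms (c i) (kf (c i)) ltac:(specialize (Hcge i); unfold M3 in *; lia) Hk1 Hfk) as [_ [_ H3]].
    rewrite HcS in Hhi.
    specialize (H3 (n - c i)%nat ltac:(lia)).
    replace (c i + (n - c i))%nat with n in H3 by lia.
    fold (sg (c i)) in H3.
    pose proof (Hsgs i Hi). pose proof (Hsmall i ltac:(lia)) as [Hthi _].
    assert (Hy0 : 0 <= l n / E n).
    { apply Rdiv_le_0_compat; [apply l_nonneg| apply HEpos]; specialize (Hcge i); lia. }
    rewrite Rminus_0_r, Rabs_pos_eq by lra.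
    assert (Cy * (sg (c i) + th ^ c i) <= Cy * (3 * e1)) by (apply Rmult_le_compat_l; lra).
    lra.
Qed.

End AL.

Lemma Dprod_S : forall d n, Dprod d (S n) = Dprod d n * INR (d (S n)).
Proof. reflexivity. Qed.

Lemma Dprod_ge1 : forall d, (forall n, (1 <= n)%nat -> (1 <= d n)%nat) ->
  forall n, 1 <= Dprod d n.
Proof.
  intros d Hd n. induction n; [unfold Dprod; simpl; lra|].
  rewrite Dprod_S. assert (1 <= INR (d (S n))) by (apply (le_INR 1); apply Hd; lia). nra.
Qed.

Lemma Dprod_mono : forall d, (forall n, (1 <= n)%nat -> (1 <= d n)%nat) ->
  forall m n, (m <= n)%nat -> Dprod d m <= Dprod d n.
Proof.
  intros d Hd m n Hmn. induction Hmn; [lra|].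
  rewrite Dprod_S. assert (1 <= INR (d (S m0))) by (apply (le_INR 1); apply Hd; lia).
  pose proof (Dprod_ge1 d Hd m0). nra.
Qed.

Lemma Dprod_Dnat : forall d n, Dprod d n = INR (Dnat d n).
Proof.
  intros d n. induction n; [reflexivity|].
  rewrite Dprod_S. simpl Dnat. rewrite mult_INR, IHn. reflexivity.
Qed.

Lemma Pprod_S : forall K d n, (1 <= n)%nat ->
  Pprod K d (S n) = Pprod K d n * (INR K * Dprod d n + INR (d n)).
Proof.
  intros K d n Hn. unfold Pprod. replace (S n - 1)%nat with (S (n - 1)) by lia.
  simpl prod1. replace (S (n - 1)) with n by lia. reflexivity.
Qed.

Lemma Pprod_ge : forall K d, (1 <= K)%nat -> (forall n, (1 <= n)%nat -> (1 <= d n)%nat) ->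
  forall n, (1 <= n)%nat -> 2 ^ (n - 1) <= Pprod K d n.
Proof.
  intros K d HK Hd n Hn. induction n; [lia|].
  destruct (Nat.eq_dec n 0) as [->|Hn0].
  - unfold Pprod. simpl. lra.
  - rewrite Pprod_S by lia. specialize (IHn ltac:(lia)).
    replace (S n - 1)%nat with (S (n - 1)) by lia. simpl pow.
    assert (1 <= INR K) by (apply (le_INR 1); lia).
    assert (1 <= INR (d n)) by (apply (le_INR 1); apply Hd; lia).
    pose proof (Dprod_ge1 d Hd n).
    assert (2 <= INR K * Dprod d n + INR (d n)) by nra.
    assert (0 < 2 ^ (n - 1)) by (apply pow_lt; lra). nra.
Qed.

Lemma Eexp_S : forall D K d n, (1 <= n)%nat ->
  Eexp D K d (S n) = Eexp D K d n * (INR D * (INR K * Dprod d n + INR (d n))).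
Proof.
  intros. unfold Eexp. rewrite Pprod_S by auto. simpl pow. ring.
Qed.

Lemma prod1_pos : forall f n, (forall i, (1 <= i)%nat -> 0 < f i) -> 0 < prod1 f n.
Proof.
  intros f n Hf. induction n; simpl; [lra|]. apply Rmult_lt_0_compat; auto. apply Hf; lia.
Qed.

Lemma prod1_nonneg : forall f n, (forall i, (1 <= i)%nat -> 0 <= f i) -> 0 <= prod1 f n.
Proof.
  intros f n Hf. induction n; simpl; [lra|]. apply Rmult_le_pos; auto. apply Hf; lia.
Qed.

Lemma ln_prod1 : forall f n, (forall i, (1 <= i)%nat -> 0 < f i) ->
  ln (prod1 f n) = ssum (fun i => ln (f i)) n.
Proof.
  intros f n Hf. induction n; simpl; [apply ln_1|].
  rewrite ln_mult; [rewrite IHn; reflexivity| apply prod1_pos; auto| apply Hf; lia].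
Qed.

Lemma rpow_pos : forall x y, 0 < x -> rpow x y = Rpower x y.
Proof.
  intros x y Hx. unfold rpow. destruct (Rle_dec x 0); [lra|reflexivity].
Qed.

Lemma prod1_rpow : forall f n y, (forall i, (1 <= i)%nat -> 0 < f i) ->
  prod1 (fun i => rpow (f i) y) n = Rpower (prod1 f n) y.
Proof.
  intros f n y Hf. induction n; simpl.
  - unfold Rpower. rewrite ln_1, Rmult_0_r, exp_0. reflexivity.
  - rewrite IHn, rpow_pos by (apply Hf; lia). rewrite Rpower_mult_distr; auto.
    apply prod1_pos; auto. apply Hf; lia.
Qed.

Lemma ln2_lt_1 : ln 2 < 1.
Proof.
  rewrite <- ln_exp with (x := 1). apply ln_increasing; [lra|].
  pose proof (exp_ineq1 1 ltac:(lra)). lra.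
Qed.

Lemma ln2_pos : 0 < ln 2.
Proof. rewrite <- ln_1. apply ln_increasing; lra. Qed.

Lemma Rpower_neg_decr : forall x y e, e <= 0 -> 0 < x -> x <= y -> Rpower y e <= Rpower x e.
Proof.
  intros x y e He Hx Hxy.
  replace e with (- (- e)) by ring. rewrite (Rpower_Ropp x (- e)), (Rpower_Ropp y (- e)).
  apply Rinv_le_contravar; [apply Rpower_pos|]. apply Rpower_le_base; lra.
Qed.

Lemma Cmod_le_ReIm : forall z : C, Cmod z <= Rabs (Re z) + Rabs (Im z).
Proof.
  intros z. pose proof (Cmod_ge_0 z). pose proof (Cmod2_alt z).
  pose proof (Rabs_pos (Re z)). pose proof (Rabs_pos (Im z)).
  assert (Re z ^ 2 = Rabs (Re z) ^ 2) by (rewrite <- Rsqr_pow2, <- Rsqr_pow2; apply Rsqr_abs).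
  assert (Im z ^ 2 = Rabs (Im z) ^ 2) by (rewrite <- Rsqr_pow2, <- Rsqr_pow2; apply Rsqr_abs).
  nra.
Qed.

Lemma Cmod_csum1 : forall f w K, (forall j, (1 <= j <= K)%nat -> Cmod (f j) <= w j) ->
  Cmod (csum1 f K) <= ssum w K.
Proof.
  intros f w K. induction K; intros H; simpl.
  - rewrite Cmod_0. lra.
  - eapply Rle_trans; [apply Cmod_triangle|]. pose proof (H (S K) ltac:(lia)).
    assert (Cmod (csum1 f K) <= ssum w K) by (apply IHK; intros; apply H; lia). lra.
Qed.

Lemma ssum_scal : forall f c n, ssum (fun i => f i * c) n = ssum f n * c.
Proof. intros f c n. induction n; simpl; [ring|]. rewrite IHn. ring. Qed.

Lemma ssum_nonneg_gen : forall f n, (forall i, 0 <= f i) -> 0 <= ssum f n.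
Proof. intros f n Hf. induction n; simpl; [lra|]. pose proof (Hf (S n)). lra. Qed.

Lemma series_bound : forall p u K0, 1 < p -> 0 <= K0 -> (forall i, Rabs (u i) <= K0 * zt p i) ->
  Rabs (Series u) <= K0 * Series (zt p).
Proof.
  intros p u K0 Hp HK0 Hu.
  assert (Hz : ex_series (fun i => K0 * zt p i)).
  { apply ex_series_ext with (a := fun i => scal K0 (zt p i)); [reflexivity|].
    apply (@ex_series_scal_l R_AbsRing R_NormedModule). apply ex_series_zt; auto. }
  assert (Ha : ex_series (fun i => Rabs (u i))).
  { apply (@ex_series_le R_AbsRing R_CompleteNormedModule) with (b := fun i => K0 * zt p i); auto.
    intros i. change (norm (Rabs (u i))) with (Rabs (Rabs (u i))). rewrite Rabs_Rabsolu. auto. }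
  eapply Rle_trans; [apply Series_Rabs; auto|].
  rewrite <- Series_scal_l. apply Series_le; auto.
  intros i. split; [apply Rabs_pos|]. auto.
Qed.

Lemma Series_zt_nonneg : forall p, 1 < p -> 0 <= Series (zt p).
Proof.
  intros p Hp. pose proof (Series_le (fun n => 0 * zt p n) (zt p)).
  rewrite Series_scal_l, Rmult_0_l in H. apply H; [|apply ex_series_zt; auto].
  intros n; split; [lra|]. pose proof (zt_pos p n). lra.
Qed.

Lemma exp_mono : forall x y, x <= y -> exp x <= exp y.
Proof. intros x y [H|H]; [left; apply exp_increasing; auto| subst; lra]. Qed.

Lemma term_bound : forall (K : nat) (a : R) (alpha b : nat -> nat -> C) (n j : nat),
  0 < a < 1 ->
  (forall i, (1 < i <= K)%nat ->
     Rpower 2 (- rpow (log2 (Cmod (alpha 1%nat n))) a)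
       < Cmod (alpha 1%nat n) / Cmod (alpha i n)
     /\ Cmod (alpha 1%nat n) / Cmod (alpha i n)
       < Rpower 2 (rpow (log2 (Cmod (alpha 1%nat n))) a)) ->
  (forall i, (1 <= i <= K)%nat ->
     Cmod (b i n) <= Rpower 2 (rpow (log2 (Cmod (alpha 1%nat n))) a)) ->
  (1 <= j <= K)%nat -> 0 < ln (Cmod (alpha 1%nat n)) ->
  Cmod (Cdiv (b j n) (alpha j n)) <=
    exp (2 * Rpower (ln (Cmod (alpha 1%nat n))) a - ln (Cmod (alpha 1%nat n))).
Proof.
  intros K a alpha b n j Ha H5 H6 Hj Hl.
  set (a1 := Cmod (alpha 1%nat n)) in *.
  set (ll := ln a1) in *.
  assert (Ha1 : 0 < a1).
  { destruct (Rle_lt_dec a1 0) as [Hle|]; auto. exfalso.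
    pose proof (Cmod_ge_0 (alpha 1%nat n)). fold a1 in H. assert (a1 = 0) by lra.
    unfold ll in Hl. rewrite H0 in Hl. unfold ln in Hl. destruct (Rlt_dec 0 0); lra. }
  set (psi := rpow (log2 a1) a) in *.
  assert (Hlog : 0 < log2 a1) by (unfold log2; apply Rdiv_lt_0_compat; [exact Hl| apply ln2_pos]).
  assert (Hpsi0 : 0 <= psi) by (unfold psi; rewrite rpow_pos by auto; left; apply Rpower_pos).
  assert (Hpsi : psi * ln 2 <= Rpower ll a).
  { unfold psi. rewrite rpow_pos by auto. unfold log2. fold ll.
    unfold Rpower. unfold Rdiv. rewrite ln_mult by (auto; apply Rinv_0_lt_compat, ln2_pos).
    rewrite ln_Rinv by apply ln2_pos.
    rewrite <- (exp_ln (ln 2)) at 2 by apply ln2_pos.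
    rewrite <- exp_plus. apply exp_mono.
    assert (ln (ln 2) < 0).
    { rewrite <- ln_1. apply ln_increasing; [apply ln2_pos| apply ln2_lt_1]. }
    nra. }
  set (B := Rpower 2 psi).
  assert (HB1 : 1 <= B).
  { unfold B. rewrite <- (Rpower_O 2) by lra. apply Rle_Rpower; lra. }
  assert (HBe : B <= exp (Rpower ll a)).
  { unfold B, Rpower at 1. apply exp_mono. lra. }
  assert (Hb : Cmod (b j n) <= B) by (apply H6; auto).
  assert (Hinv : 0 < Cmod (alpha j n) /\ / Cmod (alpha j n) <= B / a1).
  { destruct (Nat.eq_dec j 1) as [->|Hj1].
    - fold a1. split; auto. unfold Rdiv. rewrite <- (Rmult_1_l (/ a1)) at 1.
      apply Rmult_le_compat_r; [left; apply Rinv_0_lt_compat|]; lra.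
    - destruct (H5 j ltac:(lia)) as [Hlo Hhi]. fold a1 psi in Hlo, Hhi. fold B in Hhi.
      assert (Haj : 0 < Cmod (alpha j n)).
      { destruct (Rle_lt_dec (Cmod (alpha j n)) 0) as [Hle|]; auto. exfalso.
        pose proof (Cmod_ge_0 (alpha j n)). assert (Cmod (alpha j n) = 0) by lra.
        rewrite H0 in Hlo. unfold Rdiv in Hlo. rewrite Rinv_0, Rmult_0_r in Hlo.
        pose proof (Rpower_pos 2 (- psi)). lra. }
      split; auto.
      apply (Rmult_le_reg_l a1); auto. unfold Rdiv.
      replace (a1 * (B * / a1)) with B by (field; lra). lra. }
  destruct Hinv as [Hajp Hinv].
  rewrite Cmod_div by (apply Cmod_gt_0; auto).
  assert (Hea1 : a1 = exp ll) by (unfold ll; rewrite exp_ln; auto).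
  unfold Rdiv. eapply Rle_trans.
  { apply Rmult_le_compat; [apply Cmod_ge_0| left; apply Rinv_0_lt_compat; auto| exact Hb| exact Hinv]. }
  unfold Rdiv. rewrite Hea1, <- exp_Ropp.
  assert (B * (B * exp (- ll)) <= exp (Rpower ll a) * (exp (Rpower ll a) * exp (- ll))).
  { pose proof (exp_pos (- ll)). apply Rmult_le_compat; try lra.
    - assert (0 <= B * exp (- ll)) by nra. lra.
    - apply Rmult_le_compat_r; lra. }
  rewrite <- !exp_plus in H. replace (2 * Rpower ll a - ll) with (Rpower ll a + (Rpower ll a + - ll)) by ring.
  exact H.
Qed.

Theorem lemma3p2
  (D K : nat) (A1 A2 a eps : R)
  (d : nat -> nat) (alpha b : nat -> nat -> C) (beta : nat -> Z) (c : R)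
  (HD : (1 <= D)%nat) (HK : (1 <= K)%nat)
  (HA1 : 0 < A1) (HA2 : 0 < A2) (Ha : 0 < a) (Heps : 0 < eps)
  (Hord : a < 1 /\ 1 <= A1 /\ A1 < A2)
  (Hd : forall n, (1 <= n)%nat -> (1 <= d n)%nat)
  (H1 : forall n, (1 <= n)%nat -> Cmod (alpha 1%nat n) < Cmod (alpha 1%nat (S n)))
  (H2 : forall n, (1 <= n)%nat -> Cmod (alpha 1%nat n) >= Rpower (INR n) (1 + eps))
  (H3 : LimInf_seq (fun n => rpow (Cmod (alpha 1%nat n)) (/ Eexp D K d n)) = Finite A1)
  (H4 : LimSup_seq (fun n => rpow (Cmod (alpha 1%nat n)) (/ Eexp D K d n)) = Finite A2)
  (H5 : forall n i, (1 <= n)%nat -> (1 < i <= K)%nat ->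
     Rpower 2 (- rpow (log2 (Cmod (alpha 1%nat n))) a)
       < Cmod (alpha 1%nat n) / Cmod (alpha i n)
     /\ Cmod (alpha 1%nat n) / Cmod (alpha i n)
       < Rpower 2 (rpow (log2 (Cmod (alpha 1%nat n))) a))
  (H6 : forall n i, (1 <= n)%nat -> (1 <= i <= K)%nat ->
     Cmod (b i n) <= Rpower 2 (rpow (log2 (Cmod (alpha 1%nat n))) a))
  (Hbeta : exists j, (1 <= j <= K)%nat /\ beta j <> 0%Z)
  (Hc : a < c /\ c < 1) :
  let gamma (N : nat) : C :=
    csum1 (fun j => Cmult (RtoC (IZR (beta j)))
                          (ctail (fun n => Cdiv (b j n) (alpha j n)) N)) K in
  LimInf_seq (fun N =>
    Cmod (gamma N) *
    (Rpower 2 (Rpower (INR D) (c * INR N) * prod1 (fun i => rpow (INR K * Dprod d i + INR (d i)) c) (N - 1))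
     * prod1 (fun n => Cmod (alpha 1%nat n) ^ K) N)
    ^ (D * Dnat d N)%nat) = Finite 0.
Proof.
  intros gamma.
  destruct Hord as [Ha1 [HA1' HA12]]. destruct Hc as [Hac Hc1].
  set (a1 := fun n => Cmod (alpha 1%nat n)).
  set (ll := fun n => ln (a1 n)).
  set (E := Eexp D K d).
  set (r := fun N => INR D * INR K * Dprod d N).
  set (X := fun N => Rpower (INR D) (c * INR N) * prod1 (fun i => rpow (INR K * Dprod d i + INR (d i)) c) (N - 1)).
  set (h := fun N => INR D * Dprod d N * (X N * ln 2)).
  set (th := Rpower 2 (c - 1)).
  set (p := 1 + eps / 2).
  set (Q := fun N => Rpower 2 (X N) * prod1 (fun n => Cmod (alpha 1%nat n) ^ K) N).
  set (T := fun N => Cmod (gamma N) * Q N ^ (D * Dnat d N)).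
  change (LimInf_seq T = Finite 0).
  assert (HD1 : 1 <= INR D) by (apply (le_INR 1); lia).
  assert (HK1 : 1 <= INR K) by (apply (le_INR 1); lia).
  assert (Hdn : forall n, (1 <= n)%nat -> 1 <= INR (d n)) by (intros n Hn; apply (le_INR 1); auto).
  assert (HDp : forall n, 1 <= Dprod d n) by (apply Dprod_ge1; auto).
  assert (Ha1ge : forall n, (1 <= n)%nat -> 1 <= a1 n).
  { intros n Hn. pose proof (H2 n Hn). unfold a1.
    assert (1 <= Rpower (INR n) (1 + eps)).
    { apply Rle_trans with (Rpower (INR n) 0).
      - rewrite Rpower_O; [lra| apply (lt_INR 0); lia].
      - apply Rle_Rpower; [apply (le_INR 1); lia| lra]. }
    lra. }
  assert (Hlge : forall n, (1 <= n)%nat -> (1 + eps) * ln (INR n) <= ll n).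
  { intros n Hn. pose proof (H2 n Hn). unfold ll, a1.
    assert (0 < INR n) by (apply (lt_INR 0); lia).
    replace ((1 + eps) * ln (INR n)) with (ln (Rpower (INR n) (1 + eps))) by (unfold Rpower; rewrite ln_exp; ring).
    apply ln_le; [apply Rpower_pos| lra]. }
  assert (Hlinc : forall n, (1 <= n)%nat -> ll n < ll (S n)).
  { intros n Hn. unfold ll. apply ln_increasing; [pose proof (Ha1ge n Hn); lra| apply H1; auto]. }
  assert (Hllpos : forall n, (2 <= n)%nat -> 0 < ll n).
  { intros n Hn. pose proof (Hlge n ltac:(lia)).
    assert (0 < ln (INR n)).
    { rewrite <- ln_1. apply ln_increasing; [lra|]. apply (lt_INR 1); lia. }
    nra. }
  assert (HPp : forall n, 0 < Pprod K d n).
  { intros n. unfold Pprod. apply prod1_pos. intros i Hi. pose proof (HDp i). pose proof (Hdn i Hi). nra. }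
  assert (HEpos : forall n, 0 < E n).
  { intros n. unfold E, Eexp. apply Rmult_lt_0_compat; [apply pow_lt; lra| apply HPp]. }
  assert (HES : forall n, (1 <= n)%nat -> E (S n) = E n * (INR D * (INR K * Dprod d n + INR (d n)))).
  { intros n Hn. unfold E. apply Eexp_S; auto. }
  assert (HEr : forall n, (1 <= n)%nat -> (1 + r n) * E n <= E (S n)).
  { intros n Hn. rewrite HES by auto. unfold r. pose proof (HEpos n). pose proof (Hdn n Hn).
    assert (1 <= INR D * INR (d n)) by nra. nra. }
  assert (Hr : forall n, (1 <= n)%nat -> 1 <= r n <= r (S n)).
  { intros n Hn. unfold r. rewrite Dprod_S. pose proof (HDp n). pose proof (Hdn (S n) ltac:(lia)).
    assert (1 <= INR D * INR K) by nra. split; [nra|].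
    assert (0 <= INR D * INR K * Dprod d n) by nra. nra. }
  assert (HEge : forall n, (1 <= n)%nat -> 2 ^ (n - 1) <= E n).
  { intros n Hn. unfold E, Eexp. pose proof (Pprod_ge K d HK Hd n Hn).
    pose proof (pow_R1_Rle (INR D) n HD1). pose proof (pow_lt 2 (n - 1) ltac:(lra)). nra. }
  assert (Hth : 0 < th < 1).
  { split; [apply Rpower_pos|]. unfold th. apply Rlt_le_trans with (Rpower 2 0).
    - apply Rpower_lt; lra.
    - rewrite Rpower_O; lra. }
  assert (Hth2 : / 2 <= th).
  { unfold th. replace (/ 2) with (Rpower 2 (- (1))).
    - apply Rle_Rpower; lra.
    - rewrite Rpower_Ropp, Rpower_1; lra. }
  assert (Hthpow : forall n, th ^ n = exp (INR n * ((c - 1) * ln 2))).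
  { intros n. rewrite <- Rpower_pow by lra. unfold Rpower. f_equal. unfold th, Rpower. rewrite ln_exp. ring. }
  assert (HE1 : forall n, (1 <= n)%nat -> / E (S n) <= th ^ n).
  { intros n Hn. pose proof (HEge (S n) ltac:(lia)). replace (S n - 1)%nat with n in H by lia.
    eapply Rle_trans; [apply Rinv_le_contravar with (x := 2 ^ n); [apply pow_lt; lra| exact H]|].
    rewrite Rinv_pow by lra. apply pow_incr. lra. }
  assert (HE2 : forall n, (1 <= n)%nat -> Rpower (E (S n)) (a - 1) <= th ^ n).
  { intros n Hn. pose proof (HEge (S n) ltac:(lia)). replace (S n - 1)%nat with n in H by lia.
    eapply Rle_trans; [apply Rpower_neg_decr with (x := 2 ^ n); [lra| apply pow_lt; lra| exact H]|].
    rewrite Hthpow. unfold Rpower. rewrite ln_pow by lra. apply exp_mono.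
    pose proof ln2_pos. pose proof (pos_INR n).
    assert ((a - 1) * ln 2 <= (c - 1) * ln 2) by (apply Rmult_le_compat_r; lra).
    nra. }
  assert (Hh : forall n, (1 <= n)%nat -> 0 <= h n <= 2 * th ^ n * E (S n)).
  { intros n Hn.
    set (f := fun i => INR K * Dprod d i + INR (d i)).
    assert (Hfp : forall i, (1 <= i)%nat -> 0 < f i).
    { intros i Hi. unfold f. pose proof (HDp i). pose proof (Hdn i Hi). nra. }
    set (P := Pprod K d n).
    assert (HPf : P = prod1 f (n - 1)) by reflexivity.
    assert (HPpos : 0 < P) by apply HPp.
    assert (HPge : 2 ^ (n - 1) <= P) by (apply Pprod_ge; auto).
    assert (HXn : X n = Rpower (INR D) (c * INR n) * Rpower P c).
    { unfold X. f_equal. rewrite HPf. apply prod1_rpow. auto. }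
    assert (HX0 : 0 <= X n) by (rewrite HXn; pose proof (Rpower_pos (INR D) (c * INR n)); pose proof (Rpower_pos P c); nra).
    assert (HDc : Rpower (INR D) (c * INR n) <= INR D ^ n).
    { rewrite <- Rpower_pow by lra. apply Rle_Rpower; auto. pose proof (pos_INR n). nra. }
    assert (HPc : Rpower P c <= 2 * th ^ n * P).
    { assert (Rpower P c = Rpower P (c - 1) * P).
      { rewrite <- (Rpower_1 P) at 3 by lra. rewrite <- Rpower_plus. f_equal. ring. }
      rewrite H.
      assert (Rpower P (c - 1) <= th ^ (n - 1)).
      { eapply Rle_trans; [apply Rpower_neg_decr with (x := 2 ^ (n - 1)); [lra| apply pow_lt; lra| exact HPge]|].
        rewrite Hthpow. unfold Rpower. rewrite ln_pow by lra. apply exp_mono. lra. }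
      assert (th ^ n = th * th ^ (n - 1)).
      { replace n with (S (n - 1)) at 1 by lia. reflexivity. }
      assert (0 < th ^ (n - 1)) by (apply pow_lt; lra).
      assert (th ^ (n - 1) <= 2 * th ^ n) by nra.
      nra. }
    assert (HESn : E (S n) = INR D ^ n * P * (INR D * (INR K * Dprod d n + INR (d n)))).
    { rewrite HES by auto. reflexivity. }
    pose proof ln2_pos. pose proof ln2_lt_1. pose proof (HDp n). pose proof (Hdn n Hn).
    assert (HDn : 0 < INR D ^ n) by (apply pow_lt; lra).
    split.
    - unfold h. apply Rmult_le_pos; [nra|]. apply Rmult_le_pos; lra.
    - unfold h.
      assert (X n * ln 2 <= X n) by nra.
      assert (X n <= INR D ^ n * Rpower P c).
      { rewrite HXn. apply Rmult_le_compat_r; [left; apply Rpower_pos| exact HDc]. }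
      assert (INR D * Dprod d n * (X n * ln 2) <= INR D * Dprod d n * (INR D ^ n * (2 * th ^ n * P))).
      { apply Rmult_le_compat_l; [nra|].
        assert (INR D ^ n * Rpower P c <= INR D ^ n * (2 * th ^ n * P)) by (apply Rmult_le_compat_l; lra).
        lra. }
      rewrite HESn.
      assert (Dprod d n <= INR K * Dprod d n + INR (d n)) by nra.
      assert (HZ : 0 <= 2 * th ^ n * INR D ^ n * P * INR D).
      { pose proof (pow_lt th n ltac:(lra)).
        repeat apply Rmult_le_pos; lra. }
      assert (2 * th ^ n * INR D ^ n * P * INR D * Dprod d n <= 2 * th ^ n * INR D ^ n * P * INR D * (INR K * Dprod d n + INR (d n)))
        by (apply Rmult_le_compat_l; lra).
      lra. }
  set (x := fun n => rpow (Cmod (alpha 1%nat n)) (/ Eexp D K d n)).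
  assert (Hxy : forall n, (1 <= n)%nat -> x n = exp (ll n / E n)).
  { intros n Hn. unfold x. rewrite rpow_pos by (pose proof (Ha1ge n Hn); unfold a1 in *; lra).
    unfold Rpower. f_equal. unfold ll, a1, E. unfold Rdiv. ring. }
  assert (HY : exists Yb, exists M1, forall n, (M1 <= n)%nat -> ll n / E n <= Yb).
  { assert (HLS : is_LimSup_seq x (LimSup_seq x)) by (unfold LimSup_seq; destruct (ex_LimSup_seq x); auto).
    unfold x in HLS at 2. rewrite H4 in HLS. fold x in HLS.
    destruct (HLS (mkposreal 1 Rlt_0_1)) as [_ [N HN]]. simpl in HN.
    exists (ln (A2 + 1)), (Nat.max N 1). intros n Hn.
    specialize (HN n ltac:(lia)). rewrite Hxy in HN by lia.
    rewrite <- (ln_exp (ll n / E n)). left. apply ln_increasing; [apply exp_pos| lra]. }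
  assert (Hqe : forall n, (1 <= n)%nat -> E n / E (S n) = / (INR D * (INR K * Dprod d n + INR (d n)))).
  { intros n Hn. rewrite HES by auto. pose proof (HEpos n). pose proof (HDp n). pose proof (Hdn n Hn).
    assert (0 < INR K * Dprod d n + INR (d n)) by nra.
    field. repeat split; lra. }
  assert (Hq : exists qs : R, is_lim_seq (fun n => E n / E (S n)) qs).
  { destruct (classic (exists M0, forall n, (M0 <= n)%nat -> d n = 1%nat)) as [[M0 HM0]|HnoM].
    - set (M1 := Nat.max M0 1).
      assert (HDc : forall t, Dprod d (M1 + t) = Dprod d M1).
      { induction t. { rewrite Nat.add_0_r; reflexivity. }
        rewrite Nat.add_succ_r, Dprod_S, IHt, HM0 by (unfold M1; lia). simpl INR. ring. }
      exists (/ (INR D * (INR K * Dprod d M1 + 1))).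
      apply is_lim_seq_ext_loc with (u := fun _ => / (INR D * (INR K * Dprod d M1 + 1))).
      + exists M1. intros n Hn. rewrite Hqe by (unfold M1 in *; lia).
        replace n with (M1 + (n - M1))%nat by lia. rewrite HDc.
        rewrite HM0 by (unfold M1 in *; lia). simpl INR. reflexivity.
      + apply is_lim_seq_const.
    - assert (Hinf : forall M0, exists n, (M0 <= n)%nat /\ (2 <= d n)%nat).
      { intros M0. apply NNPP. intros Hn. apply HnoM. exists (Nat.max M0 1). intros n Hn'.
        pose proof (Hd n ltac:(lia)). destruct (Nat.eq_dec (d n) 1); auto.
        exfalso. apply Hn. exists n. split; [lia|]. lia. }
      assert (Hgrow : forall t, exists N, forall n, (N <= n)%nat -> 2 ^ t <= Dprod d n).
      { induction t.
        - exists 0%nat. intros n _. simpl. apply HDp.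
        - destruct IHt as [N HN]. destruct (Hinf (S N)) as [n0 [Hn0 Hd0]].
          exists n0. intros n Hn.
          assert (2 ^ S t <= Dprod d n0).
          { replace n0 with (S (n0 - 1)) by lia. rewrite Dprod_S. replace (S (n0 - 1)) with n0 by lia.
            pose proof (HN (n0 - 1)%nat ltac:(lia)).
            assert (2 <= INR (d n0)) by (apply (le_INR 2); auto).
            simpl pow. pose proof (pow_lt 2 t ltac:(lra)). nra. }
          pose proof (Dprod_mono d Hd n0 n Hn). lra. }
      exists 0. apply is_lim_seq_spec. intros ep.
      destruct (pow_lt_1_zero (/ 2) ltac:(rewrite Rabs_pos_eq; lra) ep (cond_pos ep)) as [t Ht].
      specialize (Ht t (le_n t)). rewrite Rabs_pos_eq in Ht by (apply pow_le; lra).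
      destruct (Hgrow t) as [N HN]. exists (Nat.max N 1). intros n Hn.
      rewrite Hqe by lia. rewrite Rminus_0_r.
      pose proof (HDp n). pose proof (Hdn n ltac:(lia)). pose proof (HN n ltac:(lia)).
      assert (Hpos0 : 0 < INR K * Dprod d n + INR (d n)) by nra.
      assert (Hpos : 0 < INR D * (INR K * Dprod d n + INR (d n))) by (apply Rmult_lt_0_compat; lra).
      rewrite Rabs_pos_eq by (left; apply Rinv_0_lt_compat; auto).
      assert (Dprod d n <= INR K * Dprod d n + INR (d n)) by nra.
      assert (INR K * Dprod d n + INR (d n) <= INR D * (INR K * Dprod d n + INR (d n))) by nra.
      assert (Hinv2 : / (INR D * (INR K * Dprod d n + INR (d n))) <= / 2 ^ t).
      { apply Rinv_le_contravar; [apply pow_lt; lra| lra]. }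
      rewrite Rinv_pow in Hinv2 by lra. lra. }
  assert (HQpos : forall N, 0 < Q N).
  { intros N. unfold Q. apply Rmult_lt_0_compat; [apply Rpower_pos|]. apply prod1_pos.
    intros i Hi. apply pow_lt. pose proof (Ha1ge i Hi). unfold a1 in *. lra. }
  assert (HQ : forall N, Q N ^ (D * Dnat d N) = exp (r N * ssum ll N + h N)).
  { intros N. rewrite <- Rpower_pow by auto. unfold Rpower. f_equal.
    unfold Q. rewrite ln_mult by (try apply Rpower_pos; pose proof (HQpos N); unfold Q in *;
        apply prod1_pos; intros i Hi; apply pow_lt; pose proof (Ha1ge i Hi); unfold a1 in *; lra).
    unfold Rpower at 1. rewrite ln_exp.
    rewrite ln_prod1 by (intros i Hi; apply pow_lt; pose proof (Ha1ge i Hi); unfold a1 in *; lra).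
    assert (Hs : ssum (fun i => ln (Cmod (alpha 1%nat i) ^ K)) N = ssum ll N * INR K).
    { rewrite <- ssum_scal. induction N; simpl; [reflexivity|].
      rewrite IHN. f_equal. rewrite ln_pow by (pose proof (Ha1ge (S N) ltac:(lia)); unfold a1 in *; lra).
      unfold ll, a1. ring. }
    rewrite Hs. rewrite mult_INR, <- Dprod_Dnat. unfold r, h. ring. }
  assert (HT0 : forall N, 0 <= T N).
  { intros N. unfold T. apply Rmult_le_pos; [apply Cmod_ge_0|]. apply pow_le. left; apply HQpos. }
  set (Z := Series (zt p)).
  assert (Hp1 : 1 < p) by (unfold p; lra).
  assert (HZ : 0 <= Z) by (apply Series_zt_nonneg; auto).
  set (Bb := ssum (fun j => Rabs (IZR (beta j))) K).
  assert (HBb : 0 <= Bb) by (apply ssum_nonneg_gen; intros; apply Rabs_pos).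
  set (Cst := Bb * (2 * Z)).
  assert (HCst : 0 <= Cst) by (unfold Cst; nra).
  assert (HTb : forall (N : nat) (G : R), (1 <= N)%nat ->
     (forall k, (1 <= k)%nat -> r N * ssum ll N + h N + G + p * ln (INR k + 1) <=
                                  ll (N + k)%nat - 2 * Rpower (ll (N + k)%nat) a) ->
     T N <= Cst * exp (- G)).
  { intros N G HN HC.
    set (K0 := exp (- (r N * ssum ll N + h N + G))).
    assert (HK0 : 0 < K0) by apply exp_pos.
    assert (Hterm : forall j i, (1 <= j <= K)%nat ->
              Cmod (Cdiv (b j (N + 1 + i)%nat) (alpha j (N + 1 + i)%nat)) <= K0 * zt p i).
    { intros j i Hj.
      set (n := (N + 1 + i)%nat).
      assert (Hn2 : (2 <= n)%nat) by (unfold n; lia).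
      assert (Hn1 : (1 <= n)%nat) by lia.
      pose proof (term_bound K a alpha b n j (conj Ha Ha1) (fun i Hi => H5 n i Hn1 Hi)
                    (fun i Hi => H6 n i Hn1 Hi) Hj (Hllpos n Hn2)) as Htb.
      change (ln (Cmod (alpha 1%nat n))) with (ll n) in Htb.
      eapply Rle_trans; [apply Htb|].
      specialize (HC (S i) ltac:(lia)). replace (N + S i)%nat with n in HC by (unfold n; lia).
      unfold K0, zt. rewrite <- exp_plus. apply exp_mono.
      rewrite S_INR in HC. replace (INR i + 1 + 1) with (INR i + 2) in HC by ring. lra. }
    assert (Htail : forall j, (1 <= j <= K)%nat ->
              Cmod (ctail (fun n => Cdiv (b j n) (alpha j n)) N) <= 2 * K0 * Z).
    { intros j Hj. eapply Rle_trans; [apply Cmod_le_ReIm|]. unfold ctail.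
      assert (Hre : forall u v : R, Re (u, v) = u) by reflexivity.
      assert (Him : forall u v : R, Im (u, v) = v) by reflexivity.
      rewrite Hre, Him.
      assert (HRe : Rabs (Series (fun k => Re (Cdiv (b j (N + 1 + k)%nat) (alpha j (N + 1 + k)%nat)))) <= K0 * Z).
      { apply series_bound; auto; [lra|]. intros i.
        eapply Rle_trans; [|apply (Hterm j i Hj)].
        eapply Rle_trans; [|apply Rmax_Cmod]. apply Rmax_l. }
      assert (HIm : Rabs (Series (fun k => Im (Cdiv (b j (N + 1 + k)%nat) (alpha j (N + 1 + k)%nat)))) <= K0 * Z).
      { apply series_bound; auto; [lra|]. intros i.
        eapply Rle_trans; [|apply (Hterm j i Hj)].
        eapply Rle_trans; [|apply Rmax_Cmod]. apply Rmax_r. }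
      lra. }
    assert (Hgam : Cmod (gamma N) <= Bb * (2 * K0 * Z)).
    { unfold gamma, Bb. rewrite <- ssum_scal. apply Cmod_csum1. intros j Hj.
      rewrite Cmod_mult, Cmod_R. apply Rmult_le_compat_l; [apply Rabs_pos|]. apply Htail; auto. }
    unfold T. rewrite HQ.
    assert (K0 * exp (r N * ssum ll N + h N) = exp (- G)).
    { unfold K0. rewrite <- exp_plus. f_equal. ring. }
    pose proof (exp_pos (r N * ssum ll N + h N)).
    unfold Cst.
    assert (Cmod (gamma N) * exp (r N * ssum ll N + h N) <= Bb * (2 * K0 * Z) * exp (r N * ssum ll N + h N))
      by (apply Rmult_le_compat_r; lra).
    nra. }
  apply is_LimInf_seq_unique. intros ep. split.
  - intros N0. apply NNPP. intros Hno.
    assert (Hall : forall n, (N0 <= n)%nat -> ep <= T n).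
    { intros n Hn. destruct (Rlt_le_dec (T n) ep) as [Hlt|Hle]; auto. exfalso. apply Hno.
      exists n. split; auto. lra. }
    pose proof (cond_pos ep) as Hep.
    set (G := Rabs (ln (Cst + 1)) + Rabs (ln ep) + 1).
    assert (HG0 : 0 <= G).
    { unfold G. pose proof (Rabs_pos (ln (Cst + 1))). pose proof (Rabs_pos (ln ep)). lra. }
    assert (HCG : Cst * exp (- G) < ep).
    { assert (Cst * exp (- G) <= (Cst + 1) * exp (- G)) by (pose proof (exp_pos (- G)); nra).
      assert ((Cst + 1) * exp (- G) = exp (ln (Cst + 1) - G)).
      { unfold Rminus. rewrite exp_plus, exp_ln by lra. reflexivity. }
      assert (Hlt9 : exp (ln (Cst + 1) - G) < exp (ln ep)).
      { apply exp_increasing. unfold G.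
        pose proof (Rle_abs (ln (Cst + 1))) as Ha9. pose proof (Rle_abs (- ln ep)) as Hb9. rewrite Rabs_Ropp in Hb9.
        lra. }
      rewrite exp_ln in Hlt9 by lra. lra. }
    assert (HF : forall N, (Nat.max N0 1 <= N)%nat -> exists k, (1 <= k)%nat /\ failk ll r h a eps G N k).
    { intros N HN. apply NNPP. intros Hk.
      assert (HC : forall k, (1 <= k)%nat -> r N * ssum ll N + h N + G + p * ln (INR k + 1) <=
                                  ll (N + k)%nat - 2 * Rpower (ll (N + k)%nat) a).
      { intros k Hk1. apply Rnot_lt_le. intros Hlt. apply Hk. exists k. split; [exact Hk1|].
        unfold failk. exact Hlt. }
      pose proof (HTb N G ltac:(lia) HC). pose proof (Hall N ltac:(lia)). lra. }
    destruct (AL_main ll E r h a eps G th 2 (Nat.max N0 1) (conj Ha Ha1) Heps HG0 Hth ltac:(lra) ltac:(lia)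
               (fun n _ => HEpos n) HEr Hr Hh HE1 HE2 Hlinc Hlge HF HY Hq) as [L HL].
    assert (Hx : is_lim_seq x (exp L)).
    { apply is_lim_seq_ext_loc with (u := fun n => exp (ll n / E n)).
      - exists 1%nat. intros n Hn. rewrite Hxy; auto.
      - apply is_lim_seq_continuous; auto. apply derivable_continuous_pt, derivable_exp. }
    pose proof (is_LimInf_seq_unique _ _ (is_lim_LimInf_seq _ _ Hx)) as HI.
    pose proof (is_LimSup_seq_unique _ _ (is_lim_LimSup_seq _ _ Hx)) as HS.
    unfold x in HI, HS. rewrite H3 in HI. rewrite H4 in HS. injection HI; injection HS; intros; lra.
  - exists 0%nat. intros n _. pose proof (HT0 n). pose proof (cond_pos ep). lra.
Qed.
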